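(* Let $m,n\ge 1$ and $k\ge 2$, and let $q_k=\lfloor mk/(m+1)\rfloor$. Let $a_{k,0,m}$ and $a_{k,l,r}$ be the coefficients of the expansion defined below. Expand $$P(\mathbf x)=\prod_{i=1}^n\big((x_i-1)^{\underline m}\big)^k=\prod_{i=1}^n\Big(a_{k,0,m}(x_i-1)^{\underline m}+\sum_{l=1}^{q_k}\sum_{r=0}^m a_{k,l,r}\big((x_i)^{\underline{m+1}}\big)^l(x_i+r-m-1)^{\underline r}\Big)$$ as a sum of terms $$c\prod_{i=1}^n\big((x_i)^{\underline{m+1}}\big)^{l_i}(x_i+r_i-m-1)^{\underline{r_i}},\qquad 0\le l_i\le q_k,\ 0\le r_i\le m,$$ where $r_i=m$ whenever $l_i=0$, and $c$ is the corresponding product of coefficients. Let $P_1$ be the sum of those terms with $\sum_i l_i\le k-1$ and total degree $\sum_i((m+1)l_i+r_i)\le mn+(m+1)(k-1)-1$. Then $P_1=P_0$, where $P_0$ is the unique polynomial in $V_{m,k}$ such that $P-P_0$ has a zero of multiplicity at least $k$ at every point of $mB^n\setminus\{\mathbf 0\}$ and a zero of multiplicity at least $k-1$ at $\mathbf 0$.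
   Context: The coefficients are defined as follows: $a_{k,0,m}$ and $a_{k,l,r}$ ($1\le l\le q_k$, $0\le r\le m$) are the unique reals with $$\big((x-1)^{\underline m}\big)^k=a_{k,0,m}(x-1)^{\underline m}+\sum_{l=1}^{q_k}\sum_{r=0}^m a_{k,l,r}\big((x)^{\underline{m+1}}\big)^l(x+r-m-1)^{\underline r}$$ in $\mathbb{R}[x]$. $mB^n=\{0,1,\ldots,m\}^n$. Falling factorials are $(y)^{\underline 0}=1$ and $(y)^{\underline j}=y(y-1)\cdots(y-j+1)$. A polynomial has a zero of multiplicity at least $k$ at $\mathbf a$ if all its partial derivatives of order less than $k$ vanish at $\mathbf a$. For an integer $k\ge 2$, a polynomial $Q$ is called $(m,k)$-reduced if two conditions hold: $\deg Q\le mn+(m+1)(k-1)-1$, and no monomial of $Q$ is divisible by $x_{i_1}^{m+1}\cdots x_{i_k}^{m+1}$ for any indices $i_1,\ldots,i_k$ (not necessarily distinct). $V_{m,k}$ is the space of $(m,k)$-reduced polynomials. *)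

(* Defs.v *)
From HB Require Import structures.
From mathcomp Require Import all_boot all_order all_algebra.
From mathcomp Require Import mpoly.
Set Implicit Arguments. Unset Strict Implicit. Unset Printing Implicit Defensive.
Import Order.TTheory GRing.Theory Num.Theory.
Local Open Scope ring_scope.

Definition ffact (T : nzRingType) (y : T) (j : nat) : T :=
  \prod_(t < j) (y - t%:R).

Definition qk (m k : nat) : nat := (m * k %/ m.+1)%N.

(* the univariate identity defining a_{k,0,m} (= a0) and a_{k,l,r} (= a l r) *)
Definition coeff_identity (R : realFieldType) (m k : nat) (a0 : R)
    (a : nat -> nat -> R) : Prop :=
  ffact ('X - 1 : {poly R}) m ^+ k =
    a0 *: ffact ('X - 1) m
    + \sum_(1 <= l < (qk m k).+1) \sum_(r < m.+1)
        a l r *: (ffact ('X : {poly R}) m.+1 ^+ l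
                  * ffact ('X + (r%:R - m.+1%:R)%:P) r).

Definition degbound (n m k : nat) : nat := (m * n + m.+1 * (k - 1) - 1)%N.

Definition Ppoly (R : realFieldType) (n m k : nat) : {mpoly R[n]} :=
  \prod_(i < n) ffact ('X_i - 1) m ^+ k.

Definition term (R : realFieldType) (n m : nat) (i : 'I_n) (l r : nat)
    : {mpoly R[n]} :=
  ffact 'X_i m.+1 ^+ l * ffact ('X_i + (r%:R - m.+1%:R)%:MP) r.

Definition choice_coef (R : realFieldType) (a0 : R) (a : nat -> nat -> R)
    (l r : nat) : R :=
  if l == 0%N then a0 else a l r.

(* P_1: sum of the terms of the expansion with sum l_i <= k-1 and
   total degree sum ((m+1) l_i + r_i) <= mn + (m+1)(k-1) - 1.
   A term is indexed by f : i |-> (l_i, r_i) with 0 <= l_i <= q_k,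
   0 <= r_i <= m and r_i = m whenever l_i = 0. *)
Definition P1poly (R : realFieldType) (n m k : nat) (a0 : R)
    (a : nat -> nat -> R) : {mpoly R[n]} :=
  \sum_(f : {ffun 'I_n -> 'I_(qk m k).+1 * 'I_m.+1}
        | [forall i, ((f i).1 == 0 :> nat) ==> ((f i).2 == m :> nat)]
          && (\sum_(i < n) (f i).1 <= k - 1)%N
          && (\sum_(i < n) (m.+1 * (f i).1 + (f i).2) <= degbound n m k)%N)
     (\prod_(i < n) choice_coef a0 a (f i).1 (f i).2)
       *: \prod_(i < n) term R m i (f i).1 (f i).2.

Definition has_zero_mult (R : realFieldType) (n : nat) (Q : {mpoly R[n]})
    (x : 'I_n -> R) (k : nat) : Prop :=
  forall alpha : 'X_{1..n}, (mdeg alpha < k)%N -> (mderivm alpha Q).@[x] = 0.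

(* (m,k)-reduced polynomials (the space V_{m,k}) *)
Definition reduced (R : realFieldType) (n m k : nat) (Q : {mpoly R[n]}) : Prop :=
  forall mon : 'X_{1..n}, mon \in msupp Q ->
    (mdeg mon <= degbound n m k)%N /\
    forall idx : 'I_k -> 'I_n,
      ~~ (\sum_(j < k) (U_(idx j) *+ m.+1) <= mon)%MM.

Definition interp_cond (R : realFieldType) (n m k : nat) (Q : {mpoly R[n]})
    : Prop :=
  (forall p : 'I_n -> 'I_m.+1, (exists i, p i != 0 :> nat) ->
      has_zero_mult (Ppoly R n m k - Q) (fun i => (p i)%:R) k)
  /\ has_zero_mult (Ppoly R n m k - Q) (fun _ => 0) (k - 1).

(* Main.v *)
Require Import Defs.
From HB Require Import structures.
From mathcomp Require Import all_boot all_order all_algebra.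
From mathcomp Require Import mpoly.
From mathcomp Require Import ring zify.
From Stdlib Require Import Lia.
Import Order.TTheory GRing.Theory Num.Theory.
Local Open Scope ring_scope.
Set Implicit Arguments. Unset Strict Implicit. Unset Printing Implicit Defensive.

Section Phi.
Variable (R : realFieldType) (n : nat).

Lemma cfu (i : 'I_n) : commr_rmorph (@mpolyC n R) 'X_i.
Proof. by move=> a; rewrite /GRing.comm mulrC. Qed.

Definition phi (i : 'I_n) (p : {poly R}) : {mpoly R[n]} := horner_morph (cfu i) p.

Lemma phiX i : phi i 'X = 'X_i. Proof. exact: horner_morphX. Qed.
Lemma phiC i c : phi i c%:P = c%:MP. Proof. exact: horner_morphC. Qed.
Lemma phiM i p q : phi i (p * q) = phi i p * phi i q. Proof. exact: rmorphM. Qed.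
Lemma phiD i p q : phi i (p + q) = phi i p + phi i q. Proof. exact: rmorphD. Qed.
Lemma phiB i p q : phi i (p - q) = phi i p - phi i q. Proof. exact: rmorphB. Qed.
Lemma phiXn i p k : phi i (p ^+ k) = phi i p ^+ k. Proof. exact: rmorphXn. Qed.
Lemma phiZ i c p : phi i (c *: p) = c *: phi i p.
Proof. by rewrite -mul_polyC phiM phiC mul_mpolyC. Qed.
Lemma phi_nat i t : phi i t%:R = t%:R. Proof. exact: rmorph_nat. Qed.
Lemma phi_sum i (I : Type) (r : seq I) (P : pred I) (F : I -> {poly R}) :
  phi i (\sum_(j <- r | P j) F j) = \sum_(j <- r | P j) phi i (F j).
Proof. exact: rmorph_sum. Qed.
Lemma phi_prod i (I : Type) (r : seq I) (P : pred I) (F : I -> {poly R}) :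
  phi i (\prod_(j <- r | P j) F j) = \prod_(j <- r | P j) phi i (F j).
Proof. exact: rmorph_prod. Qed.
Lemma phi_ffact i y j : phi i (ffact y j) = ffact (phi i y) j.
Proof. by rewrite /ffact phi_prod; apply: eq_bigr => t _; rewrite phiB phi_nat. Qed.

Lemma phi_eval i p (x : 'I_n -> R) : (phi i p).@[x] = p.[x i].
Proof.
elim/poly_ind: p => [|p c IH]; first by rewrite /phi rmorph0 meval0 horner0.
by rewrite phiD phiM phiX phiC mevalD mevalM IH mevalXU mevalC hornerMXaddC.
Qed.

Lemma mderiv_phi j i p : mderiv j (phi i p) = if i == j then phi i p^`() else 0.
Proof.
elim/poly_ind: p => [|p c IH].
  by rewrite /phi rmorph0 mderiv0 deriv0 rmorph0; case: ifP.
rewrite phiD phiM phiX phiC mderivD mderivM mderivC addr0 IH derivMXaddC.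
have -> : mderiv j ('X_i : {mpoly R[n]}) = (i == j)%:R.
  rewrite mderivX mnm1E; case: eqP => [->|_]; last by rewrite scale0r.
  have -> : (U_(j) - U_(j))%MM = 0%MM by apply/mnmP => t; rewrite mnmBE subnn mnm0E.
  by rewrite scale1r mpolyX0.
case: eqP => _; last by rewrite mul0r mulr0 add0r.
by rewrite mulr1 phiD phiM phiX addrC.
Qed.

Lemma mderiv_prod_phi j (G : 'I_n -> {poly R}) :
  mderiv j (\prod_i phi i (G i)) =
  \prod_i phi i (if i == j then (G i)^`() else G i).
Proof.
rewrite (bigD1 j) //= mderivM.
have -> : mderiv j (\prod_(i | i != j) phi i (G i)) = 0.
  apply: (big_ind (fun q => mderiv j q = 0)).
  - by rewrite -mpolyC1 mderivC.
  - by move=> x y hx hy; rewrite mderivM hx hy mul0r mulr0 addr0.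
  - by move=> i /negbTE hij; rewrite mderiv_phi hij.
rewrite mulr0 addr0 [RHS](bigD1 j) //= eqxx mderiv_phi eqxx; congr (_ * _).
by apply: eq_bigr => i /negbTE ->.
Qed.

Lemma derivS_aux (p : {poly R}) s : (0 < s)%N -> (p^`(s - nat_of_bool true))^`() = p^`(s).
Proof. by case: s => // s _; rewrite subSS subn0 derivnS. Qed.

Lemma mderivm_prod_phi (a : 'X_{1..n}) (G : 'I_n -> {poly R}) :
  mderivm a (\prod_i phi i (G i)) = \prod_i phi i ((G i)^`(a i)).
Proof.
have [d] := ubnP (mdeg a); elim: d a G => // d IH a G hd.
case: (boolP [exists j, 0 < a j]%N) => [/existsP [j hj]|].
  have ea : a = (a - U_(j) + U_(j))%MM.
    apply/mnmP => t; rewrite mnmDE mnmBE mnm1E; case: eqP => [<-|_].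
      by rewrite subnK.
    by rewrite subn0 addn0.
  rewrite ea mderivmDm mderivmU1m IH; last first.
    by move: hd; rewrite {1}ea mdegD mdeg1 addn1 ltnS.
  rewrite mderiv_prod_phi; apply: eq_bigr => i _.
  rewrite mnmDE mnmBE mnm1E; case: eqP => [->|/eqP ne].
    rewrite subnK ?eqxx ?derivS_aux //=.
  by rewrite eq_sym (negbTE ne) subn0 addn0.
rewrite negb_exists => /forallP h.
have -> : a = 0%MM by apply/mnmP => t; rewrite mnm0E; move: (h t); case: (a t).
rewrite mderivm0m; apply: eq_bigr => i _; by rewrite mnm0E derivn0.
Qed.

Lemma meval_prod_phi (G : 'I_n -> {poly R}) (x : 'I_n -> R) :
  (\prod_i phi i (G i)).@[x] = \prod_i (G i).[x i].
Proof. rewrite rmorph_prod; apply: eq_bigr => i _; exact: phi_eval. Qed.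
End Phi.

Section Uni.
Variable R : realFieldType.

Lemma deriv_root_aux (a : R) (u : {poly R}) s j : (j <= s)%N ->
  exists w, (('X - a%:P)^+s * u)^`(j) = ('X - a%:P)^+(s - j) * w
            /\ w.[a] = (s ^_ j)%:R * u.[a].
Proof.
elim: j => [_|j IH hj].
  by exists u; rewrite derivn0 subn0 ffactn0 mul1r.
have [w [ew hw]] := IH (ltnW hj).
exists ((s - j)%:R *: w + ('X - a%:P) * w^`()); split.
  rewrite derivnS ew derivM deriv_exp derivXsubC mul1r.
  have -> : (s - j = (s - j.+1).+1)%N by rewrite subnSK.
  rewrite /= exprS scaler_nat mulrDr mulrnAr -mulrnAl mulrA [(_ - a%:P) * _]mulrC.
  done.
rewrite hornerD hornerM hornerXsubC subrr mul0r addr0 hornerZ hw.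
by rewrite mulrA -natrM ffactnSr mulnC.
Qed.

Lemma deriv_root0 (a : R) (u G : {poly R}) s j :
  G = ('X - a%:P)^+s * u -> (j < s)%N -> (G^`(j)).[a] = 0.
Proof.
move=> -> hj; have [w [-> _]] := deriv_root_aux a u (ltnW hj).
by rewrite hornerM horner_exp hornerXsubC subrr expr0n subn_eq0 leqNgt hj mul0r.
Qed.

Lemma deriv_root_neq0 (a : R) (u G : {poly R}) s :
  G = ('X - a%:P)^+s * u -> u.[a] != 0 -> (G^`(s)).[a] != 0.
Proof.
move=> -> hu; have [w [-> hw]] := deriv_root_aux a u (leqnn s).
rewrite subnn expr0 mul1r hw mulf_neq0 // ffactnn pnatr_eq0 -lt0n.
exact: fact_gt0.
Qed.
End Uni.

Section BU.
Variable R : realFieldType.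
Variable m : nat.

Definition bu (l r : nat) : {poly R} :=
  ffact 'X m.+1 ^+ l * ffact ('X + (r%:R - m.+1%:R)%:P) r.

Lemma ffact_XsubC (a : R) j :
  ffact ('X - a%:P) j = \prod_(t < j) ('X - (a + t%:R)%:P).
Proof.
apply: eq_bigr => t _; by rewrite rmorphD /= polyC_natr opprD addrA.
Qed.

Lemma ffact_XsubC_monic (a : R) j : ffact ('X - a%:P) j \is monic.
Proof. by rewrite ffact_XsubC monic_prod_XsubC. Qed.

Lemma ffact_XsubC_size (a : R) j : size (ffact ('X - a%:P) j) = j.+1.
Proof. by rewrite ffact_XsubC size_prod_XsubC [index_enum _]unlock -enumT size_enum_ord. Qed.

Lemma XE : ('X : {poly R}) = 'X - 0%:P. Proof. by rewrite subr0. Qed.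
Lemma XaddE (c : R) : ('X : {poly R}) + c%:P = 'X - (- c)%:P.
Proof. by rewrite polyCN opprK. Qed.

Lemma bu_monic l r : bu l r \is monic.
Proof.
rewrite /bu monicMl; first by rewrite XaddE ffact_XsubC_monic.
by rewrite monic_exp // XE ffact_XsubC_monic.
Qed.

Lemma bu_size l r : size (bu l r) = (m.+1 * l + r).+1.
Proof.
have h1 : size (ffact ('X + (r%:R - m.+1%:R)%:P : {poly R}) r) = r.+1.
  by rewrite XaddE ffact_XsubC_size.
have h2 : ffact ('X : {poly R}) m.+1 \is monic by rewrite XE ffact_XsubC_monic.
have h3 : size (ffact ('X : {poly R}) m.+1) = m.+2 by rewrite XE ffact_XsubC_size.
have h4 : ffact ('X : {poly R}) m.+1 ^+ l != 0.
  by rewrite expf_neq0 // -size_poly_gt0 h3.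
have h5 := size_exp (ffact ('X : {poly R}) m.+1) l.
rewrite h3 /= in h5.
rewrite /bu size_monicM ?monic_exp // ?h1; last by rewrite -size_poly_gt0 h1.
have h6 : (0 < size (ffact ('X : {poly R}) m.+1 ^+ l))%N by rewrite size_poly_gt0.
by rewrite -(prednK h6) h5 mulnC addnS.
Qed.

Lemma bu_lead l r : (size ((bu l r - 'X^(m.+1 * l + r))%R) <= m.+1 * l + r)%N.
Proof.
apply/leq_sizeP => j hj; rewrite coefB coefXn.
have hb := bu_size l r.
move: hj; rewrite leq_eqVlt => /orP [/eqP <-|hj].
  have := bu_monic l r; move/monicP; rewrite lead_coefE hb /= => ->.
  by rewrite eqxx subrr.
rewrite nth_default ?hb // (gtn_eqF hj) subrr //.
Qed.

Definition g1 (p : nat) : {poly R} := \prod_(t < m.+1 | (t : nat) != p) ('X - t%:R).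

Lemma ffactX_split p : (p <= m)%N -> ffact ('X : {poly R}) m.+1 = ('X - (p%:R)%:P) * g1 p.
Proof.
move=> hp; rewrite /ffact (bigD1 (Ordinal (hp : (p < m.+1)%N))) //= polyC_natr; congr (_ * _).
Qed.

Lemma natr_neq0_diff (a b : nat) : a != b -> (a%:R - b%:R : R) != 0.
Proof. by move=> h; rewrite subr_eq0 eqr_nat. Qed.

Lemma g1_neq0 p : (g1 p).[p%:R] != 0.
Proof.
rewrite horner_prod; apply/prodf_neq0 => t ht.
by rewrite -polyC_natr hornerXsubC natr_neq0_diff // eq_sym.
Qed.

Lemma ffactc_split r p : (r <= m)%N -> (p <= m)%N -> (m - r < p)%N ->
  exists h1, ffact ('X + (r%:R - m.+1%:R)%:P : {poly R}) r = ('X - (p%:R)%:P) * h1.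
Proof.
move=> hr hp hrp.
have ht : (p + r - m.+1 < r)%N by lia.
exists (\prod_(t < r | t != Ordinal ht) ('X + (r%:R - m.+1%:R)%:P - t%:R)).
rewrite /ffact (bigD1 (Ordinal ht)) //=; congr (_ * _).
rewrite -addrA; congr (_ + _).
rewrite -polyC_natr -polyCB -polyCN; congr _%:P.
have hle : (m.+1 <= p + r)%N by lia.
rewrite natrB // natrD; ring.
Qed.

Lemma ffactc_neq0 r : (r <= m)%N ->
  (ffact ('X + (r%:R - m.+1%:R)%:P : {poly R}) r).[(m - r)%:R] != 0.
Proof.
move=> hr; rewrite horner_prod; apply/prodf_neq0 => t _.
rewrite hornerD hornerN hornerD hornerX hornerC -polyC_natr hornerC natrB //.
have -> : m%:R - r%:R + (r%:R - m.+1%:R) - t%:R = - (t.+1)%:R :> R.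
  rewrite -[m.+1]addn1 -[t.+1]addn1 !natrD; ring.
by rewrite oppr_eq0 pnatr_eq0.
Qed.

Lemma bu_root l r p : (r <= m)%N -> (p <= m)%N ->
  exists q, bu l r = ('X - (p%:R)%:P)^+(l + (m - r < p)%N) * q.
Proof.
move=> hr hp; rewrite /bu (ffactX_split hp) exprMn.
case: (boolP (m - r < p)%N) => h.
  have [h1 ->] := ffactc_split hr hp h.
  by exists (g1 p ^+ l * h1); rewrite addn1 exprS; ring.
by exists (g1 p ^+ l * ffact ('X + (r%:R - m.+1%:R)%:P) r); rewrite addn0; ring.
Qed.

Lemma bu_unit l r : (r <= m)%N ->
  exists2 u, bu l r = ('X - ((m - r)%:R)%:P)^+ l * u & u.[(m - r)%:R] != 0.
Proof.
move=> hr; have hp : (m - r <= m)%N by apply: leq_subr.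
exists (g1 (m - r) ^+ l * ffact ('X + (r%:R - m.+1%:R)%:P) r).
  by rewrite /bu (ffactX_split hp) exprMn; ring.
by rewrite hornerM horner_exp mulf_neq0 ?expf_neq0 ?g1_neq0 ?ffactc_neq0.
Qed.
End BU.

Section HZM.
Variable (R : realFieldType) (n : nat).
Implicit Types (p q : {mpoly R[n]}) (x : 'I_n -> R).

Lemma hzm0 x K : has_zero_mult (0 : {mpoly R[n]}) x K.
Proof. by move=> a _; rewrite raddf0 meval0. Qed.

Lemma hzmD p q x K : has_zero_mult p x K -> has_zero_mult q x K ->
  has_zero_mult (p + q) x K.
Proof. by move=> hp hq a ha; rewrite mderivmD mevalD hp // hq // addr0. Qed.

Lemma hzmB p q x K : has_zero_mult p x K -> has_zero_mult q x K ->
  has_zero_mult (p - q) x K.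
Proof. by move=> hp hq a ha; rewrite mderivmB mevalB hp // hq // subr0. Qed.

Lemma hzmZ c p x K : has_zero_mult p x K -> has_zero_mult (c *: p) x K.
Proof. by move=> hp a ha; rewrite mderivmZ mevalZ hp // mulr0. Qed.

Lemma hzm_sum (I : Type) (r : seq I) (P : pred I) (F : I -> {mpoly R[n]}) x K :
  (forall i, P i -> has_zero_mult (F i) x K) ->
  has_zero_mult (\sum_(i <- r | P i) F i) x K.
Proof.
move=> h; apply: (big_ind (fun q => has_zero_mult q x K)) => //.
- exact: hzm0.
- by move=> ? ?; apply: hzmD.
Qed.

Lemma hzm_eq p x y K : x =1 y -> has_zero_mult p x K -> has_zero_mult p y K.
Proof. by move=> e h a ha; rewrite -(meval_eq _ e) h. Qed.

Lemma hzm_prod (G : 'I_n -> {poly R}) x (mu : 'I_n -> nat) K :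
  (forall i, exists q : {poly R}, G i = ('X - (x i)%:P)^+(mu i) * q) ->
  (K <= \sum_i mu i)%N ->
  has_zero_mult (\prod_i phi i (G i)) x K.
Proof.
move=> hG hK a ha; rewrite mderivm_prod_phi meval_prod_phi.
have [i hi] : exists i, (a i < mu i)%N.
  apply/existsP; apply: contraLR ha; rewrite negb_exists => /forallP h.
  rewrite -leqNgt mdegE; apply: leq_trans hK _; apply: leq_sum => i _.
  by rewrite leqNgt; apply: h.
rewrite (bigD1 i) //=; have [q hq] := hG i.
by rewrite (deriv_root0 hq hi) mul0r.
Qed.
End HZM.

Section Expand.
Variable (R : realFieldType) (n m k : nat) (a0 : R) (a : nat -> nat -> R).

Lemma term_phi (i : 'I_n) l r : term R m i l r = phi i (bu R m l r).
Proof. by rewrite /term /bu phiM phiXn !phi_ffact phiD phiX phiC. Qed.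

Lemma Ppoly_phi : Ppoly R n m k = \prod_i phi i (ffact ('X - 1) m ^+ k).
Proof. by apply: eq_bigr => i _; rewrite phiXn phi_ffact phiB phiX -polyC1 phiC mpolyC1. Qed.

Definition w (x : 'I_(qk m k).+1 * 'I_m.+1) : R :=
  if x.1 == 0 :> nat then (if x.2 == m :> nat then a0 else 0) else a x.1 x.2.

Lemma bu0m : bu R m 0 m = ffact ('X - 1) m.
Proof.
rewrite /bu expr0 mul1r; congr ffact.
rewrite -[m.+1]addn1 natrD opprD addrA subrr add0r polyCN polyC1 //.
Qed.

Lemma uni_expand : coeff_identity m k a0 a ->
  ffact ('X - 1) m ^+ k = \sum_x w x *: bu R m x.1 x.2.
Proof.
move=> ->; rewrite -(pair_bigA _ (fun l r => w (l, r) *: bu R m l r)) /=.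
rewrite big_ord_recl /=; congr (_ + _).
  rewrite (bigD1 ord_max) //= /w /= eqxx bu0m big1 ?addr0 //.
  by move=> r /negbTE hr; rewrite -val_eqE /= in hr; rewrite hr scale0r.
rewrite big_add1 /= big_mkord; apply: eq_bigr => l _; apply: eq_bigr => r _.
by rewrite /w /=.
Qed.

Definition cond1 (F : {ffun 'I_n -> 'I_(qk m k).+1 * 'I_m.+1}) :=
  [forall i, ((F i).1 == 0 :> nat) ==> ((F i).2 == m :> nat)].

Lemma Ppoly_expand : coeff_identity m k a0 a ->
  Ppoly R n m k = \sum_(F | cond1 F)
     (\prod_(i < n) choice_coef a0 a (F i).1 (F i).2)
       *: \prod_(i < n) term R m i (F i).1 (F i).2.
Proof.
move=> ha; rewrite Ppoly_phi (uni_expand ha).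
under eq_bigr => i _ do rewrite phi_sum.
under eq_bigr => i _ do under eq_bigr => x _ do rewrite phiZ.
rewrite bigA_distr_bigA /= (bigID cond1) /= addrC big1 ?add0r; last first.
  move=> F; rewrite /cond1 negb_forall => /existsP [i]; rewrite negb_imply.
  case/andP => h1 h2; rewrite scaler_prod (bigD1 i) //= /w h1 (negbTE h2).
  by rewrite mul0r scale0r.
apply: eq_bigr => F hF; rewrite scaler_prod; congr (_ *: _).
  apply: eq_bigr => i _; rewrite /w /choice_coef; case: ifP => // h.
  by move/forallP: hF => /(_ i); rewrite h /= => ->.
by apply: eq_bigr => i _; rewrite term_phi.
Qed.
End Expand.

Lemma sum_le_const n (r : 'I_n -> nat) m : (forall i, r i <= m)%N ->
  (\sum_i r i <= m * n)%N.
Proof.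
move=> h; have -> : (m * n = \sum_(i < n) m)%N by rewrite sum_nat_const card_ord mulnC.
by apply: leq_sum => i _; apply: h.
Qed.

Lemma sum_eq_const n (r : 'I_n -> nat) m : (forall i, r i <= m)%N ->
  (m * n <= \sum_i r i)%N -> forall i, r i = m.
Proof.
move=> h hs i.
have e : (\sum_i (m - r i) + \sum_i r i = m * n)%N.
  rewrite -big_split /= (eq_bigr (fun _ => m)); last by move=> j _; rewrite subnK.
  by rewrite sum_nat_const card_ord mulnC.
have : (\sum_i (m - r i) == 0)%N.
  by rewrite -leqn0 -(leq_add2r (\sum_i r i)) e add0n.
rewrite sum_nat_eq0 => /forallP /(_ i) /=; rewrite subn_eq0 => h2.
by apply/eqP; rewrite eqn_leq h2 h.
Qed.

Lemma bad_arith n m k (l r : 'I_n -> nat) : (1 <= k)%N -> (forall i, r i <= m)%N ->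
  ~~ ((\sum_i l i <= k - 1) && (\sum_i (m.+1 * l i + r i) <= degbound n m k))%N ->
  (k <= \sum_i l i)%N \/ ((\sum_i l i = k - 1)%N /\ forall i, r i = m).
Proof.
move=> hk hr hb; case: (leqP (\sum_i l i) (k - 1)) => hL; last first.
  by left; move: hL; clear; lia.
rewrite hL /= big_split /= -big_distrr /= /degbound -ltnNge in hb.
have hS := sum_le_const hr.
move: hL hb hS; set L := (\sum_i l i)%N; set S := (\sum_i r i)%N => hL hb hS.
have hLe : L = (k - 1)%N.
  apply/eqP; rewrite eqn_leq hL /=; rewrite leqNgt; apply/negP => hlt.
  have : (m.+1 * L.+1 <= m.+1 * (k - 1))%N by rewrite leq_mul2l hlt orbT.
  rewrite mulnS; move: hb hS; clear; lia.
right; split => //; apply: sum_eq_const => //.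
move: hb; rewrite hLe; clear; lia.
Qed.

Section Interp.
Variable (R : realFieldType) (n m k : nat) (a0 : R) (a : nat -> nat -> R).

Definition good (F : {ffun 'I_n -> 'I_(qk m k).+1 * 'I_m.+1}) :=
  (\sum_(i < n) (F i).1 <= k - 1)%N
  && (\sum_(i < n) (m.+1 * (F i).1 + (F i).2) <= degbound n m k)%N.

Lemma PmP1 : coeff_identity m k a0 a ->
  Ppoly R n m k - P1poly n m k a0 a =
  \sum_(F | cond1 F && ~~ good F)
     (\prod_(i < n) choice_coef a0 a (F i).1 (F i).2)
       *: \prod_(i < n) term R m i (F i).1 (F i).2.
Proof.
move=> ha; rewrite (Ppoly_expand n ha) /P1poly (bigID good) /=.
rewrite [X in _ - X](eq_bigl (fun F => cond1 F && good F)); last first.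
  by move=> F; rewrite /cond1 /good andbA.
by rewrite addrC addrK.
Qed.

Lemma interp_P1 : (2 <= k)%N -> coeff_identity m k a0 a ->
  interp_cond m k (P1poly n m k a0 a).
Proof.
move=> hk ha.
have E : forall x K, (forall F, cond1 F -> ~~ good F ->
    has_zero_mult (\prod_i phi i (bu R m (F i).1 (F i).2)) x K) ->
  has_zero_mult (Ppoly R n m k - P1poly n m k a0 a) x K.
  move=> x K H; rewrite (PmP1 ha); apply: hzm_sum => F /andP [h1 h2].
  apply: hzmZ; under eq_bigr do rewrite term_phi; exact: H.
have hk1 : (1 <= k)%N by apply: ltnW.
split.
  move=> p [i0 hi0]; apply: E => F h1 h2.
  apply: (hzm_prod (mu := fun i => ((F i).1 + (m - (F i).2 < p i))%N)).
    by move=> i; apply: bu_root; rewrite -ltnS.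
  rewrite big_split /=.
  have hr : forall i, ((F i).2 <= m)%N by move=> i; rewrite -ltnS.
  case: (bad_arith (l := fun i => nat_of_ord (F i).1) hk1 hr h2) => [hL|[hL hr']].
    by apply: leq_trans hL _; apply: leq_addr.
  rewrite hL (bigD1 i0) //= hr' subnn lt0n hi0 /=.
  by move: hk1; clear; lia.
apply: E => F h1 h2.
apply: (hzm_prod (mu := fun i => ((F i).1 + (m - (F i).2 < 0))%N)).
  by move=> i; apply: (@bu_root R m _ _ 0) => //; rewrite -ltnS.
rewrite big_split /=.
have hr : forall i, ((F i).2 <= m)%N by move=> i; rewrite -ltnS.
case: (bad_arith (l := fun i => nat_of_ord (F i).1) hk1 hr h2) => [hL|[hL hr']].
  by apply: leq_trans (leq_trans (leq_subr 1 k) hL) _; apply: leq_addr.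
by rewrite hL leq_addr.
Qed.
End Interp.

Section Bnd.
Variable (R : realFieldType) (n : nat).

Definition Bnd (d : 'X_{1..n}) (q : {mpoly R[n]}) :=
  forall e, e \in msupp q -> (e <= d)%MM.

Lemma bnd0le (d : 'X_{1..n}) : (0 <= d)%MM.
Proof. by apply/mnm_lepP => i; rewrite mnm0E. Qed.

Lemma bndC d c : Bnd d c%:MP.
Proof. by move=> e; rewrite msuppC; case: eqP => // _; rewrite inE => /eqP ->; apply: bnd0le. Qed.

Lemma bndD d p q : Bnd d p -> Bnd d q -> Bnd d (p + q).
Proof. by move=> hp hq e /msuppD_le; rewrite mem_cat => /orP [/hp|/hq]. Qed.

Lemma bndM d1 d2 p q : Bnd d1 p -> Bnd d2 q -> Bnd (d1 + d2) (p * q).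
Proof.
move=> hp hq e /msuppM_le /allpairsP [[e1 e2] [/= h1 h2 ->]].
apply/mnm_lepP => t; rewrite !mnmDE; apply: leq_add.
  by move/mnm_lepP: (hp _ h1).
by move/mnm_lepP: (hq _ h2).
Qed.

Lemma bnd_phi (i : 'I_n) (G : {poly R}) d : (size G <= d.+1)%N -> Bnd (U_(i) *+ d) (phi i G).
Proof.
elim/poly_ind: G d => [|q c IH] d.
  by rewrite /phi rmorph0 => _ e; rewrite msupp0.
rewrite phiD phiM phiX phiC size_MXaddC.
case: (eqVneq q 0) => [-> _|hq].
  by rewrite /phi rmorph0 mul0r add0r; apply: bndC.
rewrite /= => hs; case: d hs => [|d] hs.
  by move: hs; rewrite ltnS leqn0 size_poly_eq0 (negbTE hq).
apply: bndD; last exact: bndC.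
rewrite mulmSr; apply: bndM; first by apply: IH.
by move=> e; rewrite msuppX inE => /eqP ->; apply: lepm_refl.
Qed.

Lemma bnd_prod (G : 'I_n -> {poly R}) (d : 'I_n -> nat) :
  (forall i, size (G i) <= (d i).+1)%N ->
  Bnd (\sum_i U_(i) *+ d i)%MM (\prod_i phi i (G i)).
Proof.
move=> hG; apply: (big_rec2 (fun d q => Bnd d q)).
  by move=> e; rewrite -mpolyC1 msupp1 inE => /eqP ->; apply: lepm_refl.
by move=> i y1 y2 _ hy; apply: bndM => //; apply: bnd_phi.
Qed.

Lemma sumU_E (d : 'I_n -> nat) j : ((\sum_i U_(i) *+ d i)%MM j = d j)%N.
Proof.
rewrite mnm_sumE (bigD1 j) //= mulmnE mnm1E eqxx mul1n big1 ?addn0 //.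
by move=> i /negbTE hi; rewrite mulmnE mnm1E hi.
Qed.
End Bnd.

Lemma div_count n m k (idx : 'I_k -> 'I_n) (e : 'X_{1..n}) :
  (\sum_(j < k) (U_(idx j) *+ m.+1) <= e)%MM -> (k <= \sum_i e i %/ m.+1)%N.
Proof.
move/mnm_lepP => h.
have hi : forall i, (\sum_(j < k) (idx j == i) <= e i %/ m.+1)%N.
  move=> i; rewrite leq_divRL // big_distrl /=.
  apply: leq_trans (h i); rewrite mnm_sumE; apply: leq_sum => j _.
  by rewrite mulmnE mnm1E.
have hs : (\sum_(i < n) \sum_(j < k) (idx j == i) <= \sum_i e i %/ m.+1)%N.
  by apply: leq_sum => i _; apply: hi.
apply: leq_trans hs; rewrite exchange_big /=.
rewrite -{1}(card_ord k) -sum1_card.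
apply: leq_sum => j _; rewrite (bigD1 (idx j)) //= eqxx.
by apply: leq_addr.
Qed.

Section Red.
Variable (R : realFieldType) (n m k : nat) (a0 : R) (a : nat -> nat -> R).

Lemma reduced_P1 : (2 <= k)%N -> reduced m k (P1poly n m k a0 a).
Proof.
move=> hk e he.
have [F [hF he']] : exists F : {ffun 'I_n -> 'I_(qk m k).+1 * 'I_m.+1}, (cond1 F && good F) /\
    e \in msupp (\prod_(i < n) term R m i (F i).1 (F i).2).
  move/msupp_sum_le: he => /flattenP [s /mapP [F hF ->]] hs.
  exists F; split; last exact: msuppZ_le hs.
  by move: hF; rewrite mem_filter /cond1 /good andbA => /andP [].
move: he'; under eq_bigr do rewrite term_phi.
move=> he'.
have hb : Bnd (\sum_i U_(i) *+ (m.+1 * (F i).1 + (F i).2))%MM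
    (\prod_i phi i (bu R m (F i).1 (F i).2)).
  by apply: bnd_prod => i; rewrite bu_size.
have hei : forall i, (e i <= m.+1 * (F i).1 + (F i).2)%N.
  by move=> i; move/mnm_lepP: (hb _ he') => /(_ i); rewrite sumU_E.
move: hF => /andP [_ /andP [hg1 hg2]].
split.
  rewrite mdegE; apply: leq_trans hg2; apply: leq_sum => i _; exact: hei.
move=> idx; apply/negP => /div_count hc.
have : (\sum_i e i %/ m.+1 <= \sum_(i < n) (F i).1)%N.
  apply: leq_sum => i _; apply: leq_trans (leq_div2r _ (hei i)) _.
  by rewrite mulnC divnMDl // divn_small // addn0.
move: hc hg1 hk; clear; lia.
Qed.
End Red.

Lemma idx_exists n m k (e : 'X_{1..n}) : (k <= \sum_i e i %/ m.+1)%N ->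
  exists idx : 'I_k -> 'I_n, (\sum_(j < k) (U_(idx j) *+ m.+1) <= e)%MM.
Proof.
elim: k e => [|k IH] e hk.
  exists (fun j : 'I_0 => False_rect _ (Bool.diff_false_true (ltn_ord j))).
  by rewrite big_ord0; apply/mnm_lepP => i; rewrite mnm0E.
have [i0 hi0] : exists i0, (m.+1 <= e i0)%N.
  apply/existsP; apply: contraLR hk; rewrite negb_exists => /forallP h.
  rewrite big1 // => i _.
  by rewrite divn_small // ltnNge h.
set e' := (e - U_(i0) *+ m.+1)%MM.
have ee' : forall i, e i = (e' i + (i0 == i) * m.+1)%N.
  move=> i; rewrite mnmBE mulmnE mnm1E; case: eqP => [<-|_] /=.
    by rewrite mul1n subnK.
  by rewrite mul0n !subn0 addn0.
have hk' : (k <= \sum_i e' i %/ m.+1)%N.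
  move: hk; rewrite (bigD1 i0) //= => hk; rewrite (bigD1 i0) //=; move: hk.
  rewrite ee' eqxx mul1n divnDr // divnn /=.
  rewrite (eq_bigr (fun i => (e' i %/ m.+1)%N)) //.
    by rewrite addn1 addSn ltnS.
  by move=> i /negbTE hi; rewrite ee' (eq_sym i0) hi mul0n addn0.
have [idx' hidx'] := IH e' hk'.
exists (fun j => if unlift ord_max j is Some j' then idx' j' else i0).
rewrite big_ord_recr /= unlift_none.
rewrite (eq_bigr (fun j => U_(idx' j) *+ m.+1)%MM); last first.
  move=> j _; have -> : widen_ord (leqnSn k) j = lift ord_max j.
    by apply: val_inj; rewrite /= /bump leqNgt ltn_ord.
  by rewrite liftK.
apply/mnm_lepP => i; rewrite mnmDE (ee' i) mulmnE mnm1E; apply: leq_add.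
  by move/mnm_lepP: hidx'.
by rewrite mulnC.
Qed.

Section USpan.
Variable (R : realFieldType) (m N : nat).

Definition bb (s : nat) : {poly R} := bu R m (s %/ m.+1) (s %% m.+1).

Definition spanU (s : nat) (p : {poly R}) :=
  exists c : 'I_N -> R, (forall t : 'I_N, c t != 0 -> (t <= s)%N)
                        /\ p = \sum_t c t *: bb t.

Lemma spanU0 s : spanU s 0.
Proof. by exists (fun _ => 0); split => [t|]; rewrite ?eqxx // big1 // => t _; rewrite scale0r. Qed.

Lemma spanUD s p q : spanU s p -> spanU s q -> spanU s (p + q).
Proof.
move=> [c1 [h1 ->]] [c2 [h2 ->]]; exists (fun t => c1 t + c2 t); split.
  move=> t; case: (eqVneq (c1 t) 0) => [e1|/h1 //]; rewrite e1 add0r; exact: h2.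
by rewrite -big_split /=; apply: eq_bigr => t _; rewrite scalerDl.
Qed.

Lemma spanUZ s a p : spanU s p -> spanU s (a *: p).
Proof.
move=> [c [h ->]]; exists (fun t => a * c t); split.
  by move=> t; rewrite mulf_eq0 negb_or => /andP [_ /h].
by rewrite scaler_sumr; apply: eq_bigr => t _; rewrite scalerA.
Qed.

Lemma spanU_mono s s' p : (s <= s')%N -> spanU s p -> spanU s' p.
Proof. by move=> hs [c [h ->]]; exists c; split => // t /h /leq_trans; apply. Qed.

Lemma spanU_sum s (I : Type) (r : seq I) (P : pred I) (F : I -> {poly R}) :
  (forall i, P i -> spanU s (F i)) -> spanU s (\sum_(i <- r | P i) F i).
Proof.
move=> h; apply: (big_ind (spanU s)) => //; [exact: spanU0 | exact: spanUD].
Qed.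

Lemma spanU_bb s (hs : (s < N)%N) : spanU s (bb s).
Proof.
exists (fun t : 'I_N => ((t : nat) == s)%:R); split.
  by move=> t; case: (eqVneq (t : nat) s) => [->|_]; rewrite ?eqxx.
rewrite (bigD1 (Ordinal hs)) //= eqxx scale1r big1 ?addr0 // => t ht.
by rewrite -val_eqE /= in ht; rewrite (negbTE ht) scale0r.
Qed.

Lemma poly_expand_size (q : {poly R}) :
  q = \sum_(t < size q) q`_t *: 'X^t.
Proof. by rewrite -poly_def coefK. Qed.

Lemma X_span s : (s < N)%N -> spanU s 'X^s.
Proof.
elim/ltn_ind: s => s IH hs.
have e : (m.+1 * (s %/ m.+1) + s %% m.+1 = s)%N by rewrite mulnC -divn_eq.
have hq := bu_lead R m (s %/ m.+1) (s %% m.+1); rewrite e in hq.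
have -> : 'X^s = bb s + (-1) *: (bb s - 'X^s).
  by rewrite scaleN1r opprB addrC subrK.
apply: spanUD; first exact: spanU_bb.
apply: spanUZ; rewrite [bb s - _]poly_expand_size; apply: spanU_sum => t _.
apply: spanUZ.
have ht : (t < s)%N by apply: leq_trans (ltn_ord t) hq.
apply: (spanU_mono (ltnW ht)); apply: IH => //; exact: ltn_trans hs.
Qed.
End USpan.

Lemma sum_le_eq n (u v : 'I_n -> nat) : (forall i, u i <= v i)%N ->
  (\sum_i v i <= \sum_i u i)%N -> forall i, u i = v i.
Proof.
move=> h hs i.
have e : (\sum_i (v i - u i) + \sum_i u i = \sum_i v i)%N.
  by rewrite -big_split /=; apply: eq_bigr => j _; rewrite subnK.
have : (\sum_i (v i - u i) == 0)%N.
  by rewrite -leqn0 -(leq_add2r (\sum_i u i)) e add0n.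
rewrite sum_nat_eq0 => /forallP /(_ i) /=; rewrite subn_eq0 => h2.
by apply/eqP; rewrite eqn_leq h2 h.
Qed.

Lemma tri_arith m a b : (a < b)%N ->
  (a %/ m.+1 < b %/ m.+1 + (m - b %% m.+1 < m - a %% m.+1))%N.
Proof.
move=> hab.
have ea := divn_eq a m.+1; have eb := divn_eq b m.+1.
have ra := ltn_pmod a (ltn0Sn m); have rb := ltn_pmod b (ltn0Sn m).
move: hab ea eb ra rb.
set la := (a %/ m.+1)%N; set lb := (b %/ m.+1)%N.
set ra := (a %% m.+1)%N; set rb := (b %% m.+1)%N => hab ea eb ra' rb'.
case: (ltnP ra rb) => hr.
  have -> : (m - rb < m - ra)%N by move: hr rb'; clear; lia.
  rewrite addn1 ltnS leqNgt; apply/negP => hl.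
  have : (lb.+1 * m.+1 <= la * m.+1)%N by rewrite leq_mul2r hl orbT.
  rewrite mulSn; move: hab ea eb rb'; clear; lia.
have -> : (m - rb < m - ra)%N = false by apply/negP; move: hr; clear; lia.
rewrite addn0 ltnNge; apply/negP => hl.
have : (lb * m.+1 <= la * m.+1)%N by rewrite leq_mul2r hl orbT.
move: hab ea eb hr; clear; lia.
Qed.

Section MSpan.
Variable (R : realFieldType) (n m k : nat).
Let N := (degbound n m k).+1.

Definition Bf (f : {ffun 'I_n -> 'I_N}) : {mpoly R[n]} :=
  \prod_i phi i (bb R m (f i)).

Definition spanM (P : {ffun 'I_n -> 'I_N} -> Prop) (p : {mpoly R[n]}) :=
  exists C : {ffun 'I_n -> 'I_N} -> R, (forall f, C f != 0 -> P f)
                        /\ p = \sum_f C f *: Bf f.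

Lemma spanM0 P : spanM P 0.
Proof. by exists (fun _ => 0); split => [f|]; rewrite ?eqxx // big1 // => f _; rewrite scale0r. Qed.

Lemma spanMD P p q : spanM P p -> spanM P q -> spanM P (p + q).
Proof.
move=> [c1 [h1 ->]] [c2 [h2 ->]]; exists (fun t => c1 t + c2 t); split.
  move=> t; case: (eqVneq (c1 t) 0) => [e1|/h1 //]; rewrite e1 add0r; exact: h2.
by rewrite -big_split /=; apply: eq_bigr => t _; rewrite scalerDl.
Qed.

Lemma spanMZ P a p : spanM P p -> spanM P (a *: p).
Proof.
move=> [c [h ->]]; exists (fun t => a * c t); split.
  by move=> t; rewrite mulf_eq0 negb_or => /andP [_ /h].
by rewrite scaler_sumr; apply: eq_bigr => t _; rewrite scalerA.
Qed.

Lemma spanM_mono (P Q : {ffun 'I_n -> 'I_N} -> Prop) p :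
  (forall f, P f -> Q f) -> spanM P p -> spanM Q p.
Proof. by move=> hPQ [c [h ->]]; exists c; split => // f /h /hPQ. Qed.

Lemma Xe_span (e : 'X_{1..n}) : (forall i, e i < N)%N ->
  spanM (fun f => forall i, (f i <= e i)%N) 'X_[e].
Proof.
move=> he.
have [c hc] := fin_all_exists (fun i => @X_span R m N (e i) (he i)).
rewrite mpolyXE_id.
have -> : \prod_(i < n) 'X_i ^+ e i =
    \prod_(i < n) \sum_(t < N) (c i t *: phi i (bb R m t)) :> {mpoly R[n]}.
  apply: eq_bigr => i _; rewrite -phiX -phiXn; have [_ ->] := hc i.
  by rewrite phi_sum; apply: eq_bigr => t _; rewrite phiZ.
rewrite bigA_distr_bigA /=.
exists (fun f => \prod_i c i (f i)); split.
  move=> f /prodf_neq0 h i; have [h1 _] := hc i; exact: h1 (h i isT).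
by apply: eq_bigr => f _; rewrite scaler_prod.
Qed.

Definition admf (f : {ffun 'I_n -> 'I_N}) :=
  (\sum_i (f i %/ m.+1) < k)%N /\ (\sum_i (f i : nat) <= degbound n m k)%N.

Lemma span_red (D : {mpoly R[n]}) :
  (forall e, e \in msupp D ->
     (\sum_i (e i %/ m.+1) < k)%N /\ (mdeg e <= degbound n m k)%N) ->
  spanM admf D.
Proof.
move=> hD; rewrite (mpolyE D) big_seq.
apply: (big_ind (spanM admf)); [exact: spanM0 | exact: spanMD |].
move=> e he; apply: spanMZ; have [h1 h2] := hD e he.
have hle : forall i, (e i <= mdeg e)%N.
  by move=> i; rewrite mdegE (bigD1 i) //= leq_addr.
apply: (spanM_mono _ (Xe_span _)); last first.
  by move=> i; rewrite ltnS (leq_trans (hle i)).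
move=> f hf; split.
  apply: leq_ltn_trans h1; apply: leq_sum => i _; exact: leq_div2r.
apply: leq_trans h2; rewrite mdegE; apply: leq_sum => i _; exact: hf.
Qed.

Lemma tri (C : {ffun 'I_n -> 'I_N} -> R) (D : {mpoly R[n]}) :
  (forall f, C f != 0 -> admf f) -> D = \sum_f C f *: Bf f ->
  (forall p : 'I_n -> 'I_m.+1, (exists i, p i != 0 :> nat) ->
      has_zero_mult D (fun i => (p i)%:R) k) ->
  has_zero_mult D (fun _ => 0) (k - 1) -> (1 < k)%N ->
  D = 0.
Proof.
move=> hC hD Hp H0 hk.
case: (boolP [exists f, C f != 0]) => [/existsP [f1 hf1]|]; last first.
  rewrite negb_exists => /forallP h; rewrite hD big1 // => f _.
  by move: (h f); rewrite negbK => /eqP ->; rewrite scale0r.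
exfalso.
case: (@arg_minnP _ f1 (fun f => C f != 0) (fun f : {ffun 'I_n -> 'I_N} => (\sum_i (f i : nat))%N) hf1) => f0 hf0 hmin.
have hr : forall i, (f0 i %% m.+1 <= m)%N by move=> i; rewrite -ltnS ltn_pmod.
have hp : forall i, (m - f0 i %% m.+1 < m.+1)%N by move=> i; rewrite ltnS leq_subr.
pose p := fun i => Ordinal (hp i).
pose al := [multinom (f0 i %/ m.+1)%N | i < n].
have key : (mderivm al D).@[fun i => (p i)%:R] != 0.
  rewrite hD raddf_sum raddf_sum (bigD1 f0) //=.
  rewrite mderivmZ mevalZ /Bf mderivm_prod_phi meval_prod_phi.
  rewrite [X in _ + X]big1 ?addr0; last first.
    move=> f hf; rewrite mderivmZ mevalZ mderivm_prod_phi meval_prod_phi.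
    case: (eqVneq (C f) 0) => [->|hCf]; first by rewrite mul0r.
    have [i hi] : exists i, (f0 i < f i)%N.
      apply/existsP; apply: contraLR hf; rewrite negb_exists => /forallP h.
      have h' : forall i, (f i <= f0 i)%N by move=> i; rewrite leqNgt h.
      have := sum_le_eq h' (hmin f hCf) => e.
      by rewrite negbK; apply/eqP/ffunP => i; apply: val_inj; exact: e.
    rewrite (bigD1 i) //= mnmE.
    have hrf : (f i %% m.+1 <= m)%N by rewrite -ltnS ltn_pmod.
    have [q hq] := bu_root R (f i %/ m.+1) hrf (leq_subr _ _ : (m - f0 i %% m.+1 <= m)%N).
    by rewrite /bb (deriv_root0 hq (tri_arith m hi)) mul0r mulr0.
  rewrite mulf_neq0 //; apply/prodf_neq0 => i _; rewrite mnmE.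
  have [u hu hu0] := bu_unit R (f0 i %/ m.+1) (hr i).
  exact: deriv_root_neq0 hu hu0.
have [hL1 hL2] := hC f0 hf0.
case: (boolP [exists i, p i != 0 :> nat]) => [/existsP [i hi]|].
  move: key; rewrite (Hp p (ex_intro _ i hi)) ?eqxx //.
  by rewrite mdegE; under eq_bigr do rewrite mnmE.
rewrite negb_exists => /forallP hz.
have hz' : forall i, (f0 i %% m.+1 = m)%N.
  move=> i; move: (hz i); rewrite negbK /= => /eqP h; move: h (hr i); clear; lia.
move: key; rewrite (meval_eq _ (_ : _ =1 fun _ => 0)); last first.
  by move=> i; move: (hz i); rewrite negbK => /eqP /= ->.
rewrite H0 ?eqxx //.
rewrite mdegE; under eq_bigr do rewrite mnmE.
have hsum : (\sum_i (f0 i : nat) = (\sum_i (f0 i %/ m.+1)) * m.+1 + m * n)%N.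
  rewrite (eq_bigr (fun i => (f0 i %/ m.+1) * m.+1 + m)%N); last first.
    by move=> i _; rewrite {1}(divn_eq (f0 i) m.+1) hz'.
  by rewrite big_split /= -big_distrl /= sum_nat_const card_ord [(n * m)%N]mulnC.
move: hL2; rewrite hsum /degbound.
set L := (\sum_i (f0 i %/ m.+1))%N => hL2.
have hk1 : (0 < m.+1 * (k - 1))%N by rewrite muln_gt0 /= subn_gt0.
have : (L * m.+1 < (k - 1) * m.+1)%N.
  rewrite [((k - 1) * _)%N]mulnC; move: hL2 hk1; clear; lia.
by rewrite ltn_pmul2r.
Qed.
End MSpan.

Lemma red_mon (R : realFieldType) n m k (Q : {mpoly R[n]}) (e : 'X_{1..n}) :
  reduced m k Q -> e \in msupp Q ->
  (\sum_i (e i %/ m.+1) < k)%N /\ (mdeg e <= degbound n m k)%N.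
Proof.
move=> hQ he; have [h1 h2] := hQ e he; split => //.
rewrite ltnNge; apply/negP => /idx_exists [idx hidx].
by move: (h2 idx); rewrite hidx.
Qed.

Unset Implicit Arguments. Set Strict Implicit. Set Printing Implicit Defensive.

Theorem lemma6p2 (R : realFieldType) (n m k : nat)
    (hm : (1 <= m)%N) (hn : (1 <= n)%N) (hk : (2 <= k)%N)
    (a0 : R) (a : nat -> nat -> R)
    (ha : coeff_identity m k a0 a) :
  reduced m k (P1poly n m k a0 a)
  /\ interp_cond m k (P1poly n m k a0 a)
  /\ (forall Q : {mpoly R[n]}, reduced m k Q -> interp_cond m k Q ->
        Q = P1poly n m k a0 a).
Proof.
have hP := reduced_P1 (n:=n) (m:=m) (a0:=a0) (a:=a) hk.
have hPi := interp_P1 n hk ha.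
split => //; split => // Q hQ hQi.
set P1 := P1poly n m k a0 a in hP hPi *.
have hDm : forall e, e \in msupp (P1 - Q) ->
    (\sum_i (e i %/ m.+1) < k)%N /\ (mdeg e <= degbound n m k)%N.
  move=> e /msuppB_le; rewrite mem_cat => /orP [] he.
    exact: red_mon hP he.
  exact: red_mon hQ he.
have [C [hC hD]] := span_red hDm.
have eD : P1 - Q = (Ppoly R n m k - Q) - (Ppoly R n m k - P1).
  by ring.
have [hQ1 hQ2] := hQi; have [hP1 hP2] := hPi.
apply/eqP; rewrite eq_sym -subr_eq0; apply/eqP; apply: (tri hC hD) => //.
  by move=> p hp; rewrite eD; apply: hzmB; [apply: hQ1 | apply: hP1].
by rewrite eD; apply: hzmB.
Qed.
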